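(* Consider the setting described in the context, and suppose that $f^*$ is $L$-Lipschitz relative to $\mathcal{E}$. Let $\hat e=\mathcal{A}_m(\ell^{\mathrm{cg}},P_{S,W},\mathcal{E})$ and $\hat f=\mathcal{A}_n(\ell^{\mathrm{fg}},\hat P_{Z,Y},\mathcal{F})$. Then the excess risk satisfies $$\mathbb{E}_{P_{X,Y}}\left[\ell^{\mathrm{fg}}(\hat f\circ\hat e(X),Y)-\ell^{\mathrm{fg}}(f^*\circ e^*(X),Y)\right]\le 2L\,\mathrm{Rate}_m(\ell^{\mathrm{cg}},P_{S,W},\mathcal{E})+\mathrm{Rate}_n(\ell^{\mathrm{fg}},\hat P_{Z,Y},\mathcal{F}).$$
   Context: Setting. $\mathcal{X}$ is an instance space, $\mathcal{Y}$ a fine-grained label space, $\mathcal{W}$ a coarse-grained (set-level) label space, $\mathcal{Z}$ a latent space. $\mathcal{S}$ is the space of finite sets $\{x_1,\dots,x_a\}$ of instances in $\mathcal{X}$, and $\mathcal{M}$ the space of finite sets of elements of $\mathcal{Z}$. There is a joint distribution of $(X,Y,S,W)$ with $X\in S$, whose marginals are $P_{X,Y}$ and $P_{S,W}$. $\mathcal{E}$ is a class of feature maps $e:\mathcal{X}\to\mathcal{Z}$; $\phi^e:\mathcal{S}\to\mathcal{M}$ sends $\{x_1,\dots,x_a\}$ to $\{e(x_1),\dots,e(x_a)\}$. $\mathcal{G}$ is a class of set-input functions $g:\mathcal{M}\to\mathcal{W}$; $\mathcal{F}$ a class of predictors $f:\mathcal{Z}\to\mathcal{Y}$. Losses $\ell^{\mathrm{fg}}:\mathcal{Y}\times\mathcal{Y}\to\mathbb{R}$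 and $\ell^{\mathrm{cg}}:\mathcal{W}\times\mathcal{W}\to\mathbb{R}$. For $e\in\mathcal{E}$, $g_e\in\arg\min_g\mathbb{E}_{P_{S,W}}\ell^{\mathrm{cg}}(g\circ\phi^e(S),W)$ and $\ell^{\mathrm{cg}}_e(s,w)=\ell^{\mathrm{cg}}(g_e\circ\phi^e(s),w)$. It is assumed there is $e_0\in\mathcal{E}$ with $g_{e_0}\circ\phi^{e_0}(S)=W$. $e^*\in\arg\min_{e\in\mathcal{E}}\mathbb{E}_{P_{S,W}}\ell^{\mathrm{cg}}_e(S,W)$, $f^*\in\arg\min_{f\in\mathcal{F}}\mathbb{E}_{P_{X,Y}}\ell^{\mathrm{fg}}(f\circ e^*(X),Y)$. $\hat P_{Z,Y}$ is the law of $(\hat e(X),Y)$. Rates. $\mathrm{Rate}_m(\ell^{\mathrm{cg}},P_{S,W},\mathcal{E})$ (for a confidence level $\delta$) bounds $\mathbb{E}_{P_{S,W}}\ell^{\mathrm{cg}}_{\hat e}(S,W)$ with probability at least $1-\delta$ for the output $\hat e$ of the pretraining algorithm $\mathcal{A}_m$ run on $m$ i.i.d. samples of $P_{S,W}$. $\mathrm{Rate}_n(\ell^{\mathrm{fg}},Q_{Z,Y},\mathcal{F})$ bounds, with probability at least $1-\delta$, the excess risk $\mathbb{E}_{Q_{Z,Y}}[\ell^{\mathrm{fg}}(\hat f(Z),Y)-\ell^{\mathrm{fg}}(f^*(Z),Y)]$ of the output $\hat f$ of $\mathcal{A}_n$ run on $n$ i.i.d. samples of $Q_{Z,Y}$.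 Relative Lipschitzness. $f$ is $L$-Lipschitz relative to $\mathcal{E}$ if for all $s\in\mathcal{S}$, $x\in s$, $y\in\mathcal{Y}$, $e,e'\in\mathcal{E}$: $|\ell^{\mathrm{fg}}(f\circ e(x),y)-\ell^{\mathrm{fg}}(f\circ e'(x),y)|\le L\,\ell^{\mathrm{cg}}(g_e\circ\phi^e(s),g_{e'}\circ\phi^{e'}(s))$. *)

(* Defs.v *)
From HB Require Import structures.
From mathcomp Require Import all_boot all_order all_algebra.
From mathcomp Require Import all_classical all_reals all_analysis.
Set Implicit Arguments. Unset Strict Implicit. Unset Printing Implicit Defensive.
Import Order.TTheory GRing.Theory Num.Theory.
Local Open Scope classical_set_scope.
Local Open Scope ring_scope.

Definition phi {X Z : Type} (e : X -> Z) (s : set X) : set Z := e @` s.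

Section Defs.
Context {R : realType} {d : measure_display} {T : measurableType d}
  (P : probability T R) {X Z Y Wt : Type}.

Definition cg_risk (Sr : T -> set X) (Wr : T -> Wt) (lcg : Wt -> Wt -> R)
  (g : set Z -> Wt) (e : X -> Z) : \bar R :=
  (\int[P]_t (lcg (g (phi e (Sr t))) (Wr t))%:E)%E.

(* E_{P_{X,Y}} l^fg (f o e (X), Y)  (= E_{Q_{Z,Y}} l^fg (f Z, Y) for Q the law of (e X, Y)) *)
Definition fg_risk (Xr : T -> X) (Yr : T -> Y) (lfg : Y -> Y -> R)
  (f : Z -> Y) (e : X -> Z) : \bar R :=
  (\int[P]_t (lfg (f (e (Xr t))) (Yr t))%:E)%E.
End Defs.

Definition rel_lipschitz {R : realType} {X Z Y Wt : Type}
  (lfg : Y -> Y -> R) (lcg : Wt -> Wt -> R) (ge : (X -> Z) -> set Z -> Wt)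
  (E : set (X -> Z)) (f : Z -> Y) (L : R) : Prop :=
  forall (s : set X), finite_set s -> forall x, s x -> forall (y : Y) (e e' : X -> Z),
    E e -> E e' ->
    `| lfg (f (e x)) y - lfg (f (e' x)) y | <= L * lcg (ge e (phi e s)) (ge e' (phi e' s)).

(* Main.v *)
Require Import Defs.
From HB Require Import structures.
From mathcomp Require Import all_boot all_order all_algebra.
From mathcomp Require Import all_classical all_reals all_analysis.
From mathcomp Require Import lra.
Import Order.TTheory GRing.Theory Num.Theory.
Local Open Scope classical_set_scope.
Local Open Scope ring_scope.

Lemma key (R : realType) (d : measure_display) (T : measurableType d)
  (P : probability T R) (A Q B C lh ls : T -> R) (L Rm Rn : R) :
  P.-integrable setT (EFin \o A) -> P.-integrable setT (EFin \o Q) ->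
  P.-integrable setT (EFin \o B) -> P.-integrable setT (EFin \o C) ->
  P.-integrable setT (EFin \o lh) -> P.-integrable setT (EFin \o ls) ->
  (\int[P]_t ((A t - Q t)%:E) <= Rn%:E)%E ->
  (\int[P]_t (Q t)%:E <= \int[P]_t (B t)%:E)%E ->
  (forall t, B t - C t <= L * (lh t + ls t)) ->
  (\int[P]_t (ls t)%:E <= \int[P]_t (lh t)%:E)%E ->
  (\int[P]_t (lh t)%:E <= Rm%:E)%E ->
  0 <= L ->
  (\int[P]_t ((A t - C t)%:E) <= (2 * L * Rm + Rn)%:E)%E.
Proof.
move=> iA iQ iB iC ih iS hAQ hQB hBC hs hh L0.
have hBC' : (\int[P]_t ((B t - C t)%:E) <= \int[P]_t ((L * (lh t + ls t))%:E))%E.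
  apply: le_integral => //.
  - under eq_fun do rewrite EFinB. exact: integrableB.
  - under eq_fun do rewrite EFinM EFinD. apply: integrableZl => //. exact: integrableD.
  - by move=> t _; rewrite lee_fin.
have e1 : (\int[P]_t ((L * (lh t + ls t))%:E) = L%:E * (\int[P]_t (lh t)%:E + \int[P]_t (ls t)%:E))%E.
  rewrite -(integralD_EFin _ ih iS) //. rewrite -integralZl //; last exact: integrableD.
have eB : forall U V : T -> R, P.-integrable setT (EFin \o U) -> P.-integrable setT (EFin \o V) ->
   (\int[P]_t ((U t - V t)%:E) = \int[P]_t (U t)%:E - \int[P]_t (V t)%:E)%E.
  move=> U V iU iV; rewrite -(integralB_EFin _ iU iV) //.
rewrite e1 (eB _ _ iB iC) in hBC'.
rewrite (eB _ _ iA iQ) in hAQ.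
rewrite (eB _ _ iA iC).
move: hBC' hAQ.
move: hQB hs hh.
rewrite -(fineK (integrable_fin_num _ iA)) //.
rewrite -(fineK (integrable_fin_num _ iQ)) //.
rewrite -(fineK (integrable_fin_num _ iB)) //.
rewrite -(fineK (integrable_fin_num _ iC)) //.
rewrite -(fineK (integrable_fin_num _ ih)) //.
rewrite -(fineK (integrable_fin_num _ iS)) //.
set a := fine (\int[P]_x (EFin \o A) x).
set q := fine (\int[P]_x (EFin \o Q) x).
set b := fine (\int[P]_x (EFin \o B) x).
set c := fine (\int[P]_x (EFin \o C) x).
set h := fine (\int[P]_x (EFin \o lh) x).
set k := fine (\int[P]_x (EFin \o ls) x).
rewrite -!EFinB -!EFinD -EFinM !lee_fin.
move=> h1 h2 h3 h4 h5.
have : L * (h + k) <= L * (2 * Rm) by apply: ler_wpM2l => //; lra.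
lra.
Qed.

Theorem proposition1 (R : realType) (d : measure_display) (T : measurableType d)
  (P : probability T R) (X Z Y Wt : Type)
  (Xr : T -> X) (Yr : T -> Y) (Sr : T -> set X) (Wr : T -> Wt)
  (lfg : Y -> Y -> R) (lcg : Wt -> Wt -> R)
  (E : set (X -> Z)) (G : set (set Z -> Wt)) (F : set (Z -> Y))
  (ge : (X -> Z) -> set Z -> Wt)
  (estar ehat : X -> Z) (fstar fhat fQ : Z -> Y) (L Rate_m Rate_n : R) :
  (* the joint law of (X,Y,S,W): S is a finite set containing X *)
  (forall t, finite_set (Sr t) /\ Sr t (Xr t)) ->
  (* l^cg is symmetric and satisfies the triangle inequality *)
  (forall a b, lcg a b = lcg b a) ->
  (forall a b c, lcg a c <= lcg a b + lcg b c) ->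
  (* integrability of the losses involved *)
  (forall e f, E e -> F f ->
     P.-integrable setT (fun t => (lfg (f (e (Xr t))) (Yr t))%:E)) ->
  (forall e, E e ->
     P.-integrable setT (fun t => (lcg (ge e (phi e (Sr t))) (Wr t))%:E)) ->
  (forall e e', E e -> E e' ->
     P.-integrable setT
       (fun t => (lcg (ge e (phi e (Sr t))) (ge e' (phi e' (Sr t))))%:E)) ->
  (* g_e in argmin_{g in G} E l^cg (g o phi^e (S), W) *)
  (forall e, E e -> G (ge e) /\
     forall g, G g -> (cg_risk P Sr Wr lcg (ge e) e <= cg_risk P Sr Wr lcg g e)%E) ->
  (* realizability: some e0 in E with g_{e0} o phi^{e0} (S) = W *)
  (exists2 e0, E e0 & forall t, ge e0 (phi e0 (Sr t)) = Wr t) ->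
  (* e* in argmin_{e in E} E l^cg_e (S, W) *)
  E estar ->
  (forall e, E e -> (cg_risk P Sr Wr lcg (ge estar) estar <= cg_risk P Sr Wr lcg (ge e) e)%E) ->
  (* f* in argmin_{f in F} E l^fg (f o e* (X), Y) *)
  F fstar ->
  (forall f, F f -> (fg_risk P Xr Yr lfg fstar estar <= fg_risk P Xr Yr lfg f estar)%E) ->
  (* f* is L-Lipschitz relative to E, with a Lipschitz constant L >= 0 *)
  0 <= L ->
  rel_lipschitz lfg lcg ge E fstar L ->
  (* outputs of the algorithms *)
  E ehat -> F fhat ->
  (* pretraining rate: E l^cg_{ehat}(S,W) <= Rate_m *)
  (cg_risk P Sr Wr lcg (ge ehat) ehat <= Rate_m%:E)%E ->
  (* fine-tuning rate: excess risk of fhat on hat P_{Z,Y} (law of (ehat X, Y)),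
     relative to a risk minimiser fQ over F, is at most Rate_n *)
  F fQ ->
  (forall f, F f -> (fg_risk P Xr Yr lfg fQ ehat <= fg_risk P Xr Yr lfg f ehat)%E) ->
  (\int[P]_t ((lfg (fhat (ehat (Xr t))) (Yr t) - lfg (fQ (ehat (Xr t))) (Yr t))%:E)
     <= Rate_n%:E)%E ->
  (* conclusion *)
  (\int[P]_t ((lfg (fhat (ehat (Xr t))) (Yr t) - lfg (fstar (estar (Xr t))) (Yr t))%:E)
     <= (2 * L * Rate_m + Rate_n)%:E)%E.
Proof.
move=> hS lsym ltri ifg icg icg2 _ _ Estar estarmin Fstar fstarmin L0 lip Ehat Fhat hRm FQ fQmin hRn.
apply: (@key R d T P (fun t => lfg (fhat (ehat (Xr t))) (Yr t)) (fun t => lfg (fQ (ehat (Xr t))) (Yr t)) (fun t => lfg (fstar (ehat (Xr t))) (Yr t)) (fun t => lfg (fstar (estar (Xr t))) (Yr t))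
  (fun t => lcg (ge ehat (phi ehat (Sr t))) (Wr t)) (fun t => lcg (ge estar (phi estar (Sr t))) (Wr t))) => //.
- exact: (ifg ehat fhat Ehat Fhat).
- exact: (ifg ehat fQ Ehat FQ).
- exact: (ifg ehat fstar Ehat Fstar).
- exact: (ifg estar fstar Estar Fstar).
- exact: (icg ehat Ehat).
- exact: (icg estar Estar).
- exact: (fQmin _ Fstar).
- move=> t.
  have [fS xS] := hS t.
  have := lip (Sr t) fS (Xr t) xS (Yr t) ehat estar Ehat Estar.
  move/(le_trans (ler_norm _)) => h1; apply: (le_trans h1).
  apply: ler_wpM2l => //.
  rewrite (lsym (ge estar (phi estar (Sr t))) (Wr t)). exact: (ltri _ (Wr t) _).
- exact: (estarmin _ Ehat).
Qed.
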